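(* For $1\le\ell\le n$ let $s_{n,\ell}$ be the number of permutations $\sigma$ of $\{1,\dots,n\}$ avoiding both $1324$ and $2134$ with $\sigma(n)=\ell$. Then \begin{align*} s_{1,1}&=1,\quad s_{2,1}=s_{2,2}=1,\\ s_{n,1}&=s_{n,2}=s_{n,3}=\sum_{m=1}^{n-1}s_{n-1,m}\quad\text{for }n\ge3,\\ s_{n,\ell}&=2s_{n-1,\ell-1}+\sum_{m=\ell}^{n-1}s_{n-1,m}\quad\text{for }4\le\ell\le n. \end{align*}
   Context: A permutation avoids a pattern $p$ if no subsequence of its one-line notation is order-isomorphic to $p$. *)

(* Defs.v *)
From mathcomp Require Import all_boot all_fingroup.
(* n = 0 is never used by the statement (it only concerns 1 <= l <= n). *)
Set Implicit Arguments. Unset Strict Implicit. Unset Printing Implicit Defensive.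

(* A permutation of {1..n} is represented by s : 'S_n acting on 'I_n = {0..n-1};
   its one-line notation is s 0, s 1, ..., s (n-1) (values shifted down by 1). *)

Definition contains_pattern (n : nat) (s : 'S_n) (p : seq nat) : bool :=
  [exists f : {ffun 'I_(size p) -> 'I_n},
     [forall a : 'I_(size p), forall b : 'I_(size p),
        ((a < b)%N ==> (f a < f b)%N) &&
        ((s (f a) < s (f b))%N == (nth 0 p a < nth 0 p b)%N)]].

Definition avoids (n : nat) (s : 'S_n) (p : seq nat) : bool :=
  ~~ contains_pattern s p.

Definition snl (n l : nat) : nat :=
  match n with
  | 0 => 0
  | n'.+1 =>
    #|[set s : 'S_n'.+1 | [&& avoids s [:: 1; 3; 2; 4], avoids s [:: 2; 1; 3; 4]
                          & (s ord_max : nat).+1 == l]]|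
  end.

(* Main.v *)
Require Import Defs.
From mathcomp Require Import all_boot all_fingroup.
From mathcomp Require zify.
From Stdlib Require Import Lia.
Set Implicit Arguments. Unset Strict Implicit. Unset Printing Implicit Defensive.


Definition ex2b n (P : nat -> nat -> bool) :=
  [exists i : 'I_n, exists j : 'I_n, P i j].
Definition ex3b n (P : nat -> nat -> nat -> bool) :=
  [exists i : 'I_n, exists j : 'I_n, exists k : 'I_n, P i j k].
Definition ex4b n (P : nat -> nat -> nat -> nat -> bool) :=
  [exists i : 'I_n, exists j : 'I_n, exists k : 'I_n, exists l : 'I_n, P i j k l].

Lemma ex2bP n (P : nat -> nat -> bool) : reflect (exists i j, [/\ i < n, j < n & P i j]) (ex2b n P).
Proof.
apply: (iffP idP).
  by case/existsP=> i /existsP [j H]; exists i, j.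
case=> i [j [Hi Hj H]]; apply/existsP; exists (Ordinal Hi); apply/existsP.
by exists (Ordinal Hj).
Qed.

Lemma ex3bP n (P : nat -> nat -> nat -> bool) : reflect (exists i j k, [/\ i < n, j < n, k < n & P i j k]) (ex3b n P).
Proof.
apply: (iffP idP).
  by case/existsP=> i /existsP [j /existsP [k H]]; exists i, j, k.
case=> i [j [k [Hi Hj Hk H]]]; apply/existsP; exists (Ordinal Hi); apply/existsP.
by exists (Ordinal Hj); apply/existsP; exists (Ordinal Hk).
Qed.

Lemma ex4bP n (P : nat -> nat -> nat -> nat -> bool) : reflect (exists i j k l, [/\ i < n, j < n, k < n, l < n & P i j k l]) (ex4b n P).
Proof.
apply: (iffP idP).
  by case/existsP=> i /existsP [j /existsP [k /existsP [l H]]]; exists i, j, k, l.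
case=> i [j [k [l [Hi Hj Hk Hl H]]]]; apply/existsP; exists (Ordinal Hi); apply/existsP.
by exists (Ordinal Hj); apply/existsP; exists (Ordinal Hk); apply/existsP; exists (Ordinal Hl).
Qed.

Definition c2b n (g : nat -> nat) (r : nat -> nat -> bool) :=
  ex2b n (fun i j => (i < j) && r (g i) (g j)).
Definition c3b n (g : nat -> nat) (q : nat -> nat -> nat -> bool) :=
  ex3b n (fun i j k => [&& i < j, j < k & q (g i) (g j) (g k)]).
Definition c4b n (g : nat -> nat) (q : nat -> nat -> nat -> nat -> bool) :=
  ex4b n (fun i j k l => [&& i < j, j < k, k < l & q (g i) (g j) (g k) (g l)]).

Definition q1324 a b c d := [&& a < c, c < b & b < d].
Definition q2134 a b c d := [&& b < a, a < c & c < d].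
Definition q132 L a b c := [&& a < c, c < b & b < L].
Definition q213 L a b c := [&& b < a, a < c & c < L].

Definition sv n (s : 'S_n) (i : nat) : nat :=
  if @insub _ (fun x => x < n) 'I_n i is Some j then val (s j) else 0.

Lemma svE n (s : 'S_n) (j : 'I_n) : sv s j = s j.
Proof. by rewrite /sv (insubT (fun x => x < n) (ltn_ord j)) /=; congr (nat_of_ord (s _)); apply: val_inj. Qed.

Lemma sv_inj n (s : 'S_n) i j : i < n -> j < n -> sv s i = sv s j -> i = j.
Proof.
move=> Hi Hj; rewrite -[i]/(nat_of_ord (Ordinal Hi)) -[j]/(nat_of_ord (Ordinal Hj)) !svE.
by move/val_inj/perm_inj=> ->.
Qed.


Definition iso (p : seq nat) a b c d :=
  [forall x : 'I_4, forall y : 'I_4,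
     (nth 0 [:: a; b; c; d] x < nth 0 [:: a; b; c; d] y) == (nth 0 p x < nth 0 p y)].

Definition o4 (k : nat) : 'I_4 := inord k.

Lemma cont_c4 n (s : 'S_n) p0 p1 p2 p3 :
  contains_pattern s [:: p0; p1; p2; p3] = c4b n (sv s) (iso [:: p0; p1; p2; p3]).
Proof.
apply/idP/idP.
- case/existsP=> f /forallP H.
  have Hv : forall x : 'I_4, nth 0 [:: sv s (f (o4 0)); sv s (f (o4 1)); sv s (f (o4 2)); sv s (f (o4 3))] x = s (f x).
    by case=> [[|[|[|[|x]]]] Hx] //=; rewrite svE; congr (nat_of_ord (s (f _))); apply: val_inj; rewrite /= inordK.
  have Hlt : forall a b : nat, a < b < 4 -> f (o4 a) < f (o4 b).
    move=> a b /andP [Hab Hb]; move: (H (o4 a)) => /forallP /(_ (o4 b)) /andP [+ _].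
    by rewrite /o4 !inordK ?Hab //=; apply: ltn_trans Hb.
  apply/ex4bP; exists (f (o4 0)), (f (o4 1)), (f (o4 2)), (f (o4 3)); split => //.
  rewrite !Hlt //=; apply/forallP => x; apply/forallP => y; rewrite !Hv.
  by move: (H x) => /forallP /(_ y) /andP [_ ->].
- case/ex4bP=> i [j [k [l [Hi Hj Hk Hl /and4P [Hij Hjk Hkl Hq]]]]].
  pose f := [ffun x : 'I_4 => nth (Ordinal Hi) [:: Ordinal Hi; Ordinal Hj; Ordinal Hk; Ordinal Hl] x].
  have Hv : forall x : 'I_4, nth 0 [:: sv s i; sv s j; sv s k; sv s l] x = s (f x).
    by case=> [[|[|[|[|x]]]] Hx] //=; rewrite ffunE /= -svE.
  apply/existsP; exists f; apply/forallP => x; apply/forallP => y.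
  move: Hq => /forallP /(_ x) /forallP /(_ y); rewrite !Hv => ->; rewrite andbT.
  apply/implyP; rewrite !ffunE.
  case: x => [[|[|[|[|x]]]] Hx] //; case: y => [[|[|[|[|y]]]] Hy] //= _; lia.
Qed.

Lemma iso1324 a b c d : iso [:: 1; 3; 2; 4] a b c d = q1324 a b c d.
Proof.
apply/idP/idP.
- move/forallP=> H.
  have G : forall x y : nat, x < 4 -> y < 4 -> (nth 0 [:: a; b; c; d] x < nth 0 [:: a; b; c; d] y) = (nth 0 [:: 1; 3; 2; 4] x < nth 0 [:: 1; 3; 2; 4] y).
    by move=> x y Hx Hy; move: (H (Ordinal Hx)) => /forallP /(_ (Ordinal Hy)) /eqP.
  move: (G 0 2 isT isT) (G 2 1 isT isT) (G 1 3 isT isT) => /= E1 E2 E3.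
  by rewrite /q1324 E1 E2 E3.
- case/and3P=> H1 H2 H3; apply/forallP => x; apply/forallP => y; apply/eqP.
  case: x => [[|[|[|[|x]]]] Hx] //; case: y => [[|[|[|[|y]]]] Hy] //=; lia.
Qed.

Lemma iso2134 a b c d : iso [:: 2; 1; 3; 4] a b c d = q2134 a b c d.
Proof.
apply/idP/idP.
- move/forallP=> H.
  have G : forall x y : nat, x < 4 -> y < 4 -> (nth 0 [:: a; b; c; d] x < nth 0 [:: a; b; c; d] y) = (nth 0 [:: 2; 1; 3; 4] x < nth 0 [:: 2; 1; 3; 4] y).
    by move=> x y Hx Hy; move: (H (Ordinal Hx)) => /forallP /(_ (Ordinal Hy)) /eqP.
  move: (G 1 0 isT isT) (G 0 2 isT isT) (G 2 3 isT isT) => /= E1 E2 E3.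
  by rewrite /q2134 E1 E2 E3.
- case/and3P=> H1 H2 H3; apply/forallP => x; apply/forallP => y; apply/eqP.
  case: x => [[|[|[|[|x]]]] Hx] //; case: y => [[|[|[|[|y]]]] Hy] //=; lia.
Qed.

Lemma c4b_ext n g q q' : (forall a b c d, q a b c d = q' a b c d) -> c4b n g q = c4b n g q'.
Proof. by move=> H; rewrite /c4b /ex4b; do 4 (apply: eq_existsb => ?); rewrite H. Qed.

Definition Av n (s : 'S_n) := ~~ c4b n (sv s) q1324 && ~~ c4b n (sv s) q2134.

Lemma avoidsE n (s : 'S_n) : avoids s [:: 1; 3; 2; 4] && avoids s [:: 2; 1; 3; 4] = Av s.
Proof. by rewrite /avoids !cont_c4 /Av (c4b_ext _ _ iso1324) (c4b_ext _ _ iso2134). Qed.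


Definition extf n (l : 'I_n.+1) (t : 'S_n) (i : 'I_n.+1) : 'I_n.+1 :=
  if unlift ord_max i is Some j then lift l (t j) else l.

Lemma extf_inj n l t : injective (@extf n l t).
Proof.
move=> x y; rewrite /extf.
case: (unliftP ord_max x) => [x' ->|->]; case: (unliftP ord_max y) => [y' ->|->] //.
- by move/lift_inj/perm_inj => ->.
all: move=> E; exfalso.
all: match goal with
  | E : lift _ (?t ?z) = _ |- _ => by move: (neq_lift l (t z)); rewrite E eqxx
  | E : _ = lift _ (?t ?z) |- _ => by move: (neq_lift l (t z)); rewrite -E eqxx
  end.
Qed.

Definition ext n l t : 'S_n.+1 := perm (@extf_inj n l t).

Lemma ext_lift n l t (j : 'I_n) : ext l t (lift ord_max j) = lift l (t j).
Proof. by rewrite permE /extf liftK. Qed.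

Lemma ext_max n l t : @ext n l t ord_max = l.
Proof. by rewrite permE /extf unlift_none. Qed.

Lemma sv_ext n l t i : i < n -> sv (@ext n l t) i = bump l (sv t i).
Proof.
move=> Hi.
have Hi' : i < n.+1 by apply: ltnW.
rewrite -{1}[i]/(nat_of_ord (Ordinal Hi')) svE.
have -> : Ordinal Hi' = lift ord_max (Ordinal Hi) by apply: val_inj; rewrite /= /bump leqNgt Hi.
by rewrite ext_lift /= -[i]/(nat_of_ord (Ordinal Hi)) svE.
Qed.

Lemma sv_ext_max n l t : sv (@ext n l t) n = l.
Proof. by rewrite -[n]/(nat_of_ord (@ord_max n)) svE ext_max. Qed.

Lemma ext_inj n l : injective (@ext n l).
Proof.
move=> t1 t2 E; apply/permP => j; apply: (@lift_inj _ l).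
by rewrite -!ext_lift E.
Qed.

Definition restrf n (s : 'S_n.+1) (j : 'I_n) : 'I_n :=
  odflt j (unlift (s ord_max) (s (lift ord_max j))).

Lemma restrf_spec n (s : 'S_n.+1) j : s (lift ord_max j) = lift (s ord_max) (restrf s j).
Proof.
rewrite /restrf.
have H : s ord_max != s (lift ord_max j).
  by apply/eqP => /perm_inj E; have := neq_lift ord_max j; rewrite -E eqxx.
by case: (unlift_some H) => k -> ->.
Qed.

Lemma restrf_inj n s : injective (@restrf n s).
Proof.
move=> x y E; apply: (@lift_inj _ ord_max); apply: (@perm_inj _ s).
by rewrite !restrf_spec E.
Qed.

Definition restr n s : 'S_n := perm (@restrf_inj n s).

Lemma ext_restr n (s : 'S_n.+1) : ext (s ord_max) (restr s) = s.
Proof.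
apply/permP => i; case: (unliftP ord_max i) => [j ->|->].
  by rewrite ext_lift permE -restrf_spec.
by rewrite ext_max.
Qed.

Lemma card_last n (P : pred 'S_n.+1) (l : 'I_n.+1) :
  #|[set s | P s && (s ord_max == l)]| = #|[set t : 'S_n | P (ext l t)]|.
Proof.
rewrite -(card_imset _ (@ext_inj n l)); apply: eq_card => s.
rewrite inE; apply/idP/idP.
- case/andP=> Hs /eqP Hl; apply/imsetP; exists (restr s); first by rewrite inE -Hl ext_restr.
  by rewrite -Hl ext_restr.
- by case/imsetP=> t; rewrite inE => Ht ->; rewrite Ht ext_max eqxx.
Qed.


Ltac bumpt x y := rewrite /bump; case: (leqP x y) => ? /=; rewrite ?add1n ?add0n; apply/idP/idP; lia.

Lemma bump_lt l a b : (bump l a < bump l b) = (a < b).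
Proof. rewrite /bump; case: (leqP l a) => ?; case: (leqP l b) => ? /=; rewrite ?add1n ?add0n; apply/idP/idP; lia. Qed.
Lemma bump_ltl l a : (bump l a < l) = (a < l).
Proof. bumpt l a. Qed.
Lemma bump_gtl l b : (l < bump l b) = (l <= b).
Proof. bumpt l b. Qed.
Lemma bump_ltK m L b : m < L -> (bump m b < L) = (b < L.-1).
Proof. move=> H; bumpt m b. Qed.
Lemma bump_ltK' m L b : L <= m -> (bump m b < L) = (b < L).
Proof. move=> H; bumpt m b. Qed.


Lemma c4_split n g g' h q4 q3 :
  (forall i, i < n -> g' i = h (g i)) ->
  (forall a b c d, q4 (h a) (h b) (h c) (h d) = q4 a b c d) ->
  (forall a b c, q4 (h a) (h b) (h c) (g' n) = q3 a b c) ->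
  c4b n.+1 g' q4 = c4b n g q4 || c3b n g q3.
Proof.
move=> Hg Hq4 Hq3; apply/idP/idP.
- case/ex4bP=> i [j [k [l [Hi Hj Hk Hl /and4P [Hij Hjk Hkl Hq]]]]].
  have Hi' : i < n by move: Hij Hjk Hkl Hl; clear; lia.
  have Hj' : j < n by move: Hij Hjk Hkl Hl; clear; lia.
  have Hk' : k < n by move: Hij Hjk Hkl Hl; clear; lia.
  rewrite (Hg i Hi') (Hg j Hj') (Hg k Hk') in Hq.
  case: (ltnP l n) => Hln.
  + rewrite (Hg l Hln) Hq4 in Hq.
    apply/orP; left; apply/ex4bP; exists i, j, k, l; split => //.
    by rewrite Hij Hjk Hkl Hq.
  + have El : l = n by apply/eqP; rewrite eqn_leq Hln -ltnS Hl.
    rewrite El Hq3 in Hq.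
    apply/orP; right; apply/ex3bP; exists i, j, k; split => //.
    by rewrite Hij Hjk Hq.
- case/orP.
  + case/ex4bP=> i [j [k [l [Hi Hj Hk Hl /and4P [Hij Hjk Hkl Hq]]]]].
    apply/ex4bP; exists i, j, k, l; split => //; try by apply: ltnW.
    by rewrite Hij Hjk Hkl !Hg // Hq4.
  + case/ex3bP=> i [j [k [Hi Hj Hk /and3P [Hij Hjk Hq]]]].
    apply/ex4bP; exists i, j, k, n; split => //; try by apply: ltnW.
    by rewrite Hij Hjk Hk (Hg i Hi) (Hg j Hj) (Hg k Hk) Hq3.
Qed.

Lemma c3_split n g g' h q3 q3' q2 :
  (forall i, i < n -> g' i = h (g i)) ->
  (forall a b c, q3 (h a) (h b) (h c) = q3' a b c) ->
  (forall a b, q3 (h a) (h b) (g' n) = q2 a b) ->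
  c3b n.+1 g' q3 = c3b n g q3' || c2b n g q2.
Proof.
move=> Hg Hq3 Hq2; apply/idP/idP.
- case/ex3bP=> i [j [k [Hi Hj Hk /and3P [Hij Hjk Hq]]]].
  have Hi' : i < n by move: Hij Hjk Hk; clear; lia.
  have Hj' : j < n by move: Hij Hjk Hk; clear; lia.
  rewrite (Hg i Hi') (Hg j Hj') in Hq.
  case: (ltnP k n) => Hkn.
  + rewrite (Hg k Hkn) Hq3 in Hq.
    apply/orP; left; apply/ex3bP; exists i, j, k; split => //.
    by rewrite Hij Hjk Hq.
  + have El : k = n by apply/eqP; rewrite eqn_leq Hkn -ltnS Hk.
    rewrite El Hq2 in Hq.
    apply/orP; right; apply/ex2bP; exists i, j; split => //.
    by rewrite Hij Hq.
- case/orP.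
  + case/ex3bP=> i [j [k [Hi Hj Hk /and3P [Hij Hjk Hq]]]].
    apply/ex3bP; exists i, j, k; split => //; try by apply: ltnW.
    by rewrite Hij Hjk !Hg // Hq3.
  + case/ex2bP=> i [j [Hi Hj /andP [Hij Hq]]].
    apply/ex3bP; exists i, j, n; split => //; try by apply: ltnW.
    by rewrite Hij Hj (Hg i Hi) (Hg j Hj) Hq2.
Qed.


Definition Qp n (t : 'S_n) L := ~~ c3b n (sv t) (q132 L) && ~~ c3b n (sv t) (q213 L).

Lemma Av_ext n l t : Av (@ext n l t) = Av t && Qp t l.
Proof.
rewrite /Av /Qp.
rewrite (@c4_split n (sv t) _ (bump l) q1324 (q132 l)); first last.
- by move=> a b c; rewrite sv_ext_max /q1324 /q132 !bump_lt bump_ltl.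
- by move=> a b c d; rewrite /q1324 !bump_lt.
- by move=> i Hi; rewrite sv_ext.
rewrite (@c4_split n (sv t) _ (bump l) q2134 (q213 l)); first last.
- by move=> a b c; rewrite sv_ext_max /q2134 /q213 !bump_lt bump_ltl.
- by move=> a b c d; rewrite /q2134 !bump_lt.
- by move=> i Hi; rewrite sv_ext.
by rewrite !negb_or; case: (c4b _ _ q1324); case: (c4b _ _ q2134); case: (c3b _ _ (q132 l)); case: (c3b _ _ (q213 l)).
Qed.

Definition Scnt n L := #|[set t : 'S_n | Av t && Qp t L]|.

Lemma snlS n l : l <= n -> snl n.+1 l.+1 = Scnt n l.
Proof.
move=> Hl; have Hl' : l < n.+1 by [].
rewrite /snl /Scnt.
have -> : [set s : 'S_n.+1 | [&& avoids s [:: 1; 3; 2; 4], avoids s [:: 2; 1; 3; 4]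
                          & (s ord_max : nat).+1 == l.+1]] =
          [set s | Av s && (s ord_max == Ordinal Hl')].
  apply/setP => s; rewrite !inE -avoidsE andbA; congr (_ && _).

rewrite card_last; apply: eq_card => t; rewrite !inE Av_ext.
by [].
Qed.


Lemma c2b_false n g : c2b n g (fun _ _ => false) = false.
Proof. by apply/negbTE/negP => /ex2bP [i [j [_ _ /andP [_ F]]]]. Qed.

Lemma Q_ext_ge n (m : 'I_n.+1) t L : L <= m -> Qp (ext m t) L = Qp t L.
Proof.
move=> Hm; rewrite /Qp.
rewrite (@c3_split n (sv t) _ (bump m) (q132 L) (q132 L) (fun _ _ => false)); first last.
- move=> a b; rewrite sv_ext_max /q132; apply/negbTE/negP => /and3P [_ H1 H2].
  move: Hm H1 H2; clear; lia.
- by move=> a b c; rewrite /q132 !bump_lt bump_ltK'.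
- by move=> i Hi; rewrite sv_ext.
rewrite (@c3_split n (sv t) _ (bump m) (q213 L) (q213 L) (fun _ _ => false)); first last.
- move=> a b; rewrite sv_ext_max /q213; apply/negbTE/negP => /and3P [_ _ H2].
  move: Hm H2; clear; lia.
- by move=> a b c; rewrite /q213 !bump_lt bump_ltK'.
- by move=> i Hi; rewrite sv_ext.
by rewrite !c2b_false !orbF.
Qed.

Definition r132 m K a b := [&& a < m, m <= b & b < K].
Definition r213 m a b := (b < a) && (a < m).
Definition Rp n (t : 'S_n) m K := ~~ c2b n (sv t) (r132 m K) && ~~ c2b n (sv t) (r213 m).

Lemma Q_ext_lt n (m : 'I_n.+1) t L : m < L -> Qp (ext m t) L = Qp t L.-1 && Rp t m L.-1.
Proof.
move=> Hm; rewrite /Qp /Rp.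
rewrite (@c3_split n (sv t) _ (bump m) (q132 L) (q132 L.-1) (r132 m L.-1)); first last.
- by move=> a b; rewrite sv_ext_max /q132 /r132 bump_ltl bump_gtl bump_ltK.
- by move=> a b c; rewrite /q132 !bump_lt bump_ltK.
- by move=> i Hi; rewrite sv_ext.
rewrite (@c3_split n (sv t) _ (bump m) (q213 L) (q213 L.-1) (r213 m)); first last.
- by move=> a b; rewrite sv_ext_max /q213 /r213 bump_lt bump_ltl Hm andbT.
- by move=> a b c; rewrite /q213 !bump_lt bump_ltK.
- by move=> i Hi; rewrite sv_ext.
by rewrite !negb_or; case: (c3b _ _ (q132 _)); case: (c3b _ _ (q213 _)); case: (c2b _ _ (r132 _ _)); case: (c2b _ _ (r213 _)).
Qed.

Lemma c3b_mono n g (q q' : nat -> nat -> nat -> bool) :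
  (forall a b c, q a b c -> q' a b c) -> c3b n g q -> c3b n g q'.
Proof.
move=> H /ex3bP [i [j [k [Hi Hj Hk /and3P [Hij Hjk Hq]]]]].
by apply/ex3bP; exists i, j, k; split => //; rewrite Hij Hjk H.
Qed.

Lemma Q_mono n (t : 'S_n) m K : m <= K -> Qp t K -> Qp t m.
Proof.
move=> HmK /andP [H1 H2]; apply/andP; split.
- apply: contra H1; apply: c3b_mono => a b c /and3P [? ? ?].
  apply/and3P; split => //; lia.
- apply: contra H2; apply: c3b_mono => a b c /and3P [? ? ?].
  apply/and3P; split => //; lia.
Qed.

Lemma sum_last n (P : pred 'S_n.+1) :
  #|[set s | P s]| = \sum_(m < n.+1) #|[set s | P s && (s ord_max == m)]|.
Proof.
rewrite -sum1_card (partition_big (fun s : 'S_n.+1 => s ord_max) predT) //=.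
apply: eq_bigr => m _; rewrite -sum1_card; apply: eq_bigl => s; rewrite !inE.
by [].
Qed.

Definition Tot n := #|[set t : 'S_n | Av t]|.

Lemma Tot_sum n : Tot n.+1 = \sum_(m < n.+1) Scnt n m.
Proof.
rewrite /Tot sum_last; apply: eq_bigr => m _.
by rewrite card_last /Scnt; apply: eq_card => t; rewrite !inE Av_ext.
Qed.

Lemma Q_small n (t : 'S_n) L : L <= 2 -> Qp t L.
Proof.
move=> HL; apply/andP; split; apply/negP => /ex3bP [i [j [k [_ _ _ /and3P [_ _ /and3P [? ? ?]]]]]]; lia.
Qed.

Lemma S_small n L : L <= 2 -> Scnt n L = Tot n.
Proof. by move=> HL; rewrite /Scnt /Tot; apply: eq_card => t; rewrite !inE Q_small // andbT. Qed.

Lemma Av_small n (t : 'S_n) : n <= 2 -> Av t.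
Proof.
move=> Hn; apply/andP; split; apply/negP => /ex4bP [i [j [k [l [_ _ _ Hl /and4P [? ? ? _]]]]]]; lia.
Qed.

Lemma Tot_small n : n <= 2 -> Tot n = n`!.
Proof.
move=> Hn; rewrite /Tot -card_Sn; apply: eq_card => t; rewrite !inE Av_small //.
Qed.


Definition Inc n (t : 'S_n) m := ~~ c2b n (sv t) (r213 m).

Lemma R_Inc n (t : 'S_n) m K : Rp t m K -> Inc t m.
Proof. by case/andP. Qed.

Lemma Inc1 n (t : 'S_n) : Inc t 1.
Proof. apply/negP => /ex2bP [a [b [_ _ /andP [_ /andP [? ?]]]]]; lia. Qed.

Lemma R0 n (t : 'S_n) K : Rp t 0 K.
Proof.
apply/andP; split; apply/negP => /ex2bP [a [b [_ _ /andP [_ H]]]].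
- by case/and3P: H.
- by case/andP: H.
Qed.

Lemma R_top n (t : 'S_n) K : Inc t K -> Rp t K K.
Proof.
move=> H; move: (H); rewrite /Inc => H'; rewrite /Rp H' andbT; apply/negP => /ex2bP [a [b [_ _ /andP [_ /and3P [? ? ?]]]]]; lia.
Qed.

Lemma R_step n (t : 'S_n) j K : 1 <= j -> j < K -> Qp t K -> Inc t j -> ~~ Inc t j.+1 -> Rp t j K.
Proof.
move=> Hj HjK /andP [N132 N213] Hinc Hninc; move: (Hinc); rewrite /Inc => Hinc'; rewrite /Rp Hinc' andbT.
apply/negP => /ex2bP [a [b [Ha Hb /andP [Hab /and3P [H1 H2 H3]]]]].
move: Hninc => /negPn /ex2bP [c [d [Hc Hd /andP [Hcd /andP [Hdc Hcj]]]]].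
have Hgc : sv t c = j.
  have : ~~ (sv t c < j).
    apply/negP => Hlt; move/negP: Hinc; apply; apply/ex2bP; exists c, d; split => //.
    by rewrite Hcd /r213 Hdc Hlt.
  move: Hcj; clear; lia.
case: (ltngtP c a) => [Hca|Hac|Eca].
- move/negP: N213; apply; apply/ex3bP; exists c, a, b; split => //.
  rewrite Hca Hab /q213 Hgc H1 H3 /= andbT.
  have : sv t b != j.
    apply/eqP => E; have : b = c by apply: (@sv_inj _ t _ _ Hb Hc); rewrite E Hgc.
    move: Hca Hab; clear; lia.
  move: H2; clear; lia.
- move/negP: N132; apply; apply/ex3bP; exists a, c, d; split => //.
  rewrite Hac Hcd /q132 Hdc Hgc HjK andbT /=.
  have Nda : ~~ (sv t d < sv t a).
    apply/negP => Hlt; move/negP: Hinc; apply; apply/ex2bP; exists a, d; split => //.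
    by rewrite /r213 Hlt H1 andbT; move: Hac Hcd; clear; lia.
  have : sv t d != sv t a.
    apply/eqP => E; have : d = a by apply: (@sv_inj _ t _ _ Hd Ha).
    move: Hac Hcd; clear; lia.
  move: Nda; clear; lia.
- by move: H1; rewrite -Eca Hgc ltnn.
Qed.

Lemma R_exists n (t : 'S_n) K : Qp t K ->
  forall d j, K - j = d -> 1 <= j <= K -> Inc t j -> exists m, [/\ 1 <= m, m <= K & Rp t m K].
Proof.
move=> HQ; elim=> [|d IH] j Hd /andP [H1 H2] Hinc.
- have EjK : j = K by move: Hd H2; clear; lia.
  rewrite EjK in Hinc H1.
  by exists K; split => //; apply: R_top.
- have HjK : j < K by move: Hd; clear; lia.
  case Hn: (Inc t j.+1).
  + apply: (IH j.+1) => //; first by move: Hd; clear; lia.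
  + exists j; split => //; try exact: ltnW.
    by apply: R_step => //; rewrite Hn.
Qed.

Lemma R_uniq n (t : 'S_n) K m m' : K <= n -> 1 <= m -> m < m' -> m' <= K ->
  Rp t m K -> Rp t m' K -> False.
Proof.
move=> Hn H1 Hmm' HK /andP [Hm _] /andP [_ Hm'].
have Hv1 : m.-1 < n by move: H1 Hmm' HK Hn; clear; lia.
have Hv2 : m < n by move: H1 Hmm' HK Hn; clear; lia.
set pa := nat_of_ord ((t^-1)%g (Ordinal Hv1)).
set pb := nat_of_ord ((t^-1)%g (Ordinal Hv2)).
have Ga : sv t pa = m.-1 by rewrite /pa svE permKV.
have Gb : sv t pb = m by rewrite /pb svE permKV.
have Hpa : pa < n by apply: ltn_ord.
have Hpb : pb < n by apply: ltn_ord.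
case: (ltngtP pa pb) => [Hab|Hba|Eab].
- move/negP: Hm; apply; apply/ex2bP; exists pa, pb; split => //.
  rewrite Hab /r132 Ga Gb leqnn /=; apply/andP; split; move: H1 Hmm' HK; clear; lia.
- move/negP: Hm'; apply; apply/ex2bP; exists pb, pa; split => //.
  rewrite Hba /r213 Ga Gb /=; apply/andP; split; move: H1 Hmm' HK; clear; lia.
- by move: Ga; rewrite Eab Gb; move: H1; clear; lia.
Qed.

Lemma sumR n (t : 'S_n) K : 1 <= K -> K <= n -> Qp t K -> \sum_(m < K.+1) (Rp t m K : nat) = 2.
Proof.
move=> H1 Hn HQ.
have [j [Hj1 HjK Rj]] := R_exists HQ (erefl (K - 1)) (ltac:(rewrite leqnn H1 //)) (Inc1 t).
rewrite big_ord_recl /= R0.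
have Hj' : j.-1 < K by move: Hj1 HjK; clear; lia.
rewrite (bigD1 (Ordinal Hj')) //=.
have -> : bump 0 j.-1 = j by rewrite /bump /=; move: Hj1; clear; lia.
rewrite Rj big1 // => i Hi.
have Hi0 : bump 0 i = i.+1 by rewrite /bump.
rewrite Hi0; case Ri: (Rp t i.+1 K) => //; exfalso.
have Hne : i.+1 != j.
  apply: contra Hi => /eqP E; apply/eqP; apply: val_inj => /=; rewrite -E.
  by [].
case: (ltngtP i.+1 j) Hne => [Hlt|Hgt|E] //.
- move=> _; apply: (R_uniq Hn _ Hlt HjK Ri Rj); by [].
- move=> _; apply: (R_uniq Hn Hj1 Hgt _ Rj Ri); exact: ltn_ord.
Qed.


Lemma card_sum (T : finType) (P : pred T) : #|[set x | P x]| = \sum_x (P x : nat).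
Proof.
rewrite -sum1_card big_mkcond /=; apply: eq_bigr => x _; rewrite inE.
by case: (P x).
Qed.

Lemma TotE N : 1 <= N -> Tot N = \sum_(1 <= m < N.+1) snl N m.
Proof.
case: N => [//|N] _.
rewrite Tot_sum big_add1 succnK big_mkord; apply: eq_bigr => m _.
by rewrite snlS // -ltnS.
Qed.

Definition Gf N' L m :=
  if L <= m then Scnt N' m
  else #|[set t : 'S_N' | (Av t && Qp t L.-1) && Rp t m L.-1]|.

Lemma F_G N' L (m : 'I_N'.+1) : 1 <= L ->
  #|[set s : 'S_N'.+1 | (Av s && Qp s L) && (s ord_max == m)]| = Gf N' L m.
Proof.
move=> HL.
rewrite (card_last (fun s => Av s && Qp s L)) /Gf.
case: leqP => Hm.
- rewrite /Scnt; apply: eq_card => t; rewrite !inE Av_ext Q_ext_ge //.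
  case Ht: (Qp t m); last by rewrite ?andbF ?andFb.
  by rewrite (Q_mono Hm Ht) andbT.
- apply: eq_card => t; rewrite !inE Av_ext Q_ext_lt //.
  case Ht: (Qp t L.-1); last by rewrite ?andbF ?andFb.
  have Hm' : m <= L.-1 by move: Hm; clear; lia.
  by rewrite (Q_mono Hm' Ht) andbT.
Qed.

Lemma main_rec N' L : 3 <= L -> L <= N'.+1 ->
  Scnt N'.+1 L = 2 * Scnt N' L.-1 + \sum_(L <= m < N'.+1) Scnt N' m.
Proof.
move=> H3 HL.
rewrite /Scnt (sum_last (fun s => Av s && Qp s L)).
rewrite (eq_bigr (fun m : 'I_N'.+1 => Gf N' L m)); last by move=> m _; rewrite F_G //; lia.
rewrite -(big_mkord xpredT (Gf N' L)) (big_cat_nat (leq0n L) HL) /=.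
congr (_ + _); last first.
  by apply: eq_big_nat => m /andP [Hm _]; rewrite /Gf Hm.
rewrite (eq_big_nat _ _ (F2 := fun m => #|[set t : 'S_N' | (Av t && Qp t L.-1) && Rp t m L.-1]|)); last first.
  by move=> m /andP [_ Hm]; rewrite /Gf leqNgt Hm.
set K := L.-1.
have EL : L = K.+1 by rewrite /K; lia.
rewrite EL big_mkord.
rewrite (eq_bigr (fun m : 'I_K.+1 => \sum_(t : 'S_N') (((Av t && Qp t K) && Rp t m K) : nat))); last by move=> m _; rewrite card_sum.
rewrite exchange_big /=.
rewrite (eq_bigr (fun t : 'S_N' => ((Av t && Qp t K) : nat) + ((Av t && Qp t K) : nat))); last first.
  move=> t _; case Ht: (Av t && Qp t K).
  + rewrite /= (eq_bigr (fun m : 'I_K.+1 => (Rp t m K : nat))) //.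
    rewrite sumR //; [lia | lia | by case/andP: Ht].
  + by rewrite big1.
by rewrite big_split /= -card_sum addnn mul2n.
Qed.

Unset Implicit Arguments. Set Strict Implicit. Set Printing Implicit Defensive.

Theorem proposition5p1 :
  [/\ snl 1 1 = 1, snl 2 1 = 1, snl 2 2 = 1,
      (forall n, 3 <= n ->
         snl n 1 = \sum_(1 <= m < n) snl n.-1 m /\
         snl n 2 = \sum_(1 <= m < n) snl n.-1 m /\
         snl n 3 = \sum_(1 <= m < n) snl n.-1 m)
    & (forall n l, 4 <= l <= n ->
         snl n l = 2 * snl n.-1 l.-1 + \sum_(l <= m < n) snl n.-1 m)].
Proof.
split.
- by rewrite (@snlS 0 0) // S_small // Tot_small.
- by rewrite (@snlS 1 0) // S_small // Tot_small.
- by rewrite (@snlS 1 1) // S_small // Tot_small.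
- case=> [//|N] HN.
  have HN1 : 1 <= N by move: HN; clear; lia.
  have HN2 : 2 <= N by move: HN; clear; lia.
  rewrite (@snlS N 0) ?(@snlS N 1) ?(@snlS N 2) // !S_small // TotE //.
- move=> n l /andP [H4 HLN].
  have -> : n = (n - 2).+2 by move: H4 HLN; clear; lia.
  have -> : l = (l - 1).+1 by move: H4; clear; lia.
  have H4' : 3 <= l - 1 by move: H4; clear; lia.
  have HLN' : l - 1 <= (n - 2).+1 by move: H4 HLN; clear; lia.
  move: H4' HLN'; set N' := n - 2; set L := l - 1 => H4b HLNb.
  clear H4 HLN; rename H4b into H4; rename HLNb into HLN.
  rewrite !succnK (@snlS N'.+1 L) // main_rec //.
  have HL : L = L.-1.+1 by move: H4; clear; lia.
  have E : snl N'.+1 L.-1.+1 = Scnt N' L.-1 by apply: snlS; move: H4 HLN; clear; lia.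
  rewrite -HL in E; rewrite E.
  congr (_ + _); rewrite big_add1 succnK; apply: eq_big_nat => m /andP [_ Hm].
  by rewrite snlS.
Qed.
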